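(* Let $G=\langle \Sigma_\tau, Q, \rightarrow, Q^0\rangle$ be a nondeterministic automaton with set of secret states $Q^S\subseteq Q$ and non-secret states $Q^{NS}=Q\setminus Q^S$. Let $\sim_o$ be an opaque observation equivalence on $G$ with respect to $Q^S$, and let $\tilde G$ be the quotient automaton of $G$ modulo $\sim_o$, with secret states $\tilde Q^S=\{[x]\mid x\in Q^S\}$. Then $det(G)$ and $det(\tilde G)$ are bisimilar, and $det_d(G)$ and $det_d(\tilde G)$ are bisimilar.
   Context: Automata: A (nondeterministic) automaton is $G=\langle \Sigma_\tau, Q,\rightarrow, Q^0\rangle$ where $\Sigma$ is a finite set of observable events, $\tau\notin\Sigma$ is a special symbol standing for every unobservable event, $\Sigma_\tau=\Sigma\cup\{\tau\}$, $Q$ is a finite state set, $\rightarrow\subseteq Q\times\Sigma_\tau\times Q$, and $Q^0\subseteq Q$ is the set of initial states. $G$ is deterministic if $|Q^0|=1$, it has no $\tau$-transitions, and $x\xrightarrow{\sigma}y_1$, $x\xrightarrow{\sigma}y_2$ imply $y_1=y_2$. For $s\in\Sigma^*$, $p\overset{s}{\Rightarrow}q$ means that there is a path from $p$ to $q$ whose label sequence, after deleting all occurrences of $\tau$, equals $s$ (for $s=\varepsilon$ this means a path consisting of zero or more $\tau$-transitions). Observer: for $B\subseteq Q$, $UR(B)=\{q\in Q\mid b\overset{\varepsilon}{\Rightarrow}q \text{ for some } b\in B\}$. The observer $det(G)=\langle\Sigma,X_{obs},\rightarrow_{obs},X^0_{obs}\rangle$ is the deterministic automaton with initial state $X^0_{obs}=UR(Q^0)$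 and transitions $X\xrightarrow{\sigma}_{obs}Y$ iff $Y=UR(\{y\mid x\xrightarrow{\sigma}y\text{ for some }x\in X\})\neq\emptyset$; $X_{obs}\subseteq 2^Q$ consists of the states reachable from $X^0_{obs}$. Secret states and desired observer: the state set is partitioned into secret states $Q^S$ and non-secret states $Q^{NS}=Q\setminus Q^S$. The desired observer $det_d(G)$ is obtained from $det(G)$ by deleting every observer state $X$ with $X\subseteq Q^S$ (together with its incident transitions) and keeping only the part reachable from the initial state. Quotient: for an equivalence relation $\sim$ on $Q$ with classes $[x]$, the quotient automaton is $\tilde G=\langle\Sigma_\tau,\{[x]\mid x\in Q\},\rightarrow_{/\sim},\{[x^0]\mid x^0\in Q^0\}\rangle$ with $[x]\xrightarrow{\sigma}_{/\sim}[y]$ iff $x'\xrightarrow{\sigma}y'$ for some $x'\in[x]$, $y'\in[y]$. Opaque observation equivalence: an equivalence relation $\sim_o\subseteq Q\times Q$ such that for all $x_1\sim_o x_2$: (i) if $x_1\overset{s}{\Rightarrow}y_1$ for some $s\in\Sigma^*$ then there is $y_2$ with $x_2\overset{s}{\Rightarrow}y_2$ and $y_1\sim_o y_2$; (ii) $x_1\in Q^S$ iff $x_2\in Q^S$. Bisimilarity: two automata $A_1,A_2$ over the same alphabet are bisimilar if there is a relation $R$ between their state sets relating every initial state of each to some initial state of the other, such that whenever $(p_1,p_2)\in R$ and $p_1\xrightarrow{\sigma}q_1$ there is $q_2$ with $p_2\xrightarrow{\sigma}q_2$ and $(q_1,q_2)\in R$, and symmetrically. *)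

(* Defs.v *)
From mathcomp Require Import all_boot.
Set Implicit Arguments. Unset Strict Implicit. Unset Printing Implicit Defensive.

(* An automaton over observable alphabet Sigma (finite):
   states Q : finType, events option Sigma (None = tau),
   transition relation tr : Q -> option Sigma -> Q -> bool, initial set Q0. *)

Section Automata.
Variable Sigma : finType.

Record lts := Lts {
  lts_state : Type;
  lts_init : lts_state -> Prop;
  lts_step : lts_state -> Sigma -> lts_state -> Prop }.

Definition bisimilar (A1 A2 : lts) : Prop :=
  exists R : lts_state A1 -> lts_state A2 -> Prop,
    (forall p1, lts_init p1 -> exists2 p2, lts_init p2 & R p1 p2) /\
    (forall p2, lts_init p2 -> exists2 p1, lts_init p1 & R p1 p2) /\
    (forall p1 p2 s q1, R p1 p2 -> lts_step p1 s q1 ->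
        exists2 q2, lts_step p2 s q2 & R q1 q2) /\
    (forall p1 p2 s q2, R p1 p2 -> lts_step p2 s q2 ->
        exists2 q1, lts_step p1 s q1 & R q1 q2).

Section OneAutomaton.
Variable Q : finType.
Variable tr : Q -> option Sigma -> Q -> bool.

Inductive lpath : Q -> seq (option Sigma) -> Q -> Prop :=
| lpath_nil p : lpath p [::] p
| lpath_cons p a q l r : tr p a q -> lpath q l r -> lpath p (a :: l) r.

(* pmap id deletes all occurrences of tau (= None). *)
Definition wtrans (p : Q) (s : seq Sigma) (q : Q) : Prop :=
  exists2 l, lpath p l q & pmap id l = s.

Definition UR (B : {set Q}) : {set Q} :=
  [set q | [exists b in B, connect (fun p p' => tr p None p') b q]].

Definition post (X : {set Q}) (a : Sigma) : {set Q} :=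
  [set y | [exists x in X, tr x (Some a) y]].

Definition obs_step (X : {set Q}) (a : Sigma) (Y : {set Q}) : bool :=
  (Y == UR (post X a)) && (Y != set0).

Variable Q0 : {set Q}.

Definition obs_init : {set Q} := UR Q0.

Definition obs_reach (X : {set Q}) : bool :=
  connect (fun X Y => [exists a, obs_step X a Y]) obs_init X.

Definition det : lts :=
  @Lts {X : {set Q} | obs_reach X}
       (fun X => val X = obs_init)
       (fun X a Y => obs_step (val X) a (val Y)).

Variable QS : {set Q}.

Definition obs_ok (X : {set Q}) : bool := ~~ (X \subset QS).

Definition obs_step_d (X Y : {set Q}) : bool :=
  [&& obs_ok X, obs_ok Y & [exists a, obs_step X a Y]].

Definition obs_reach_d (X : {set Q}) : bool :=
  [&& obs_ok obs_init, obs_ok X & connect obs_step_d obs_init X].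

Definition det_d : lts :=
  @Lts {X : {set Q} | obs_reach_d X}
       (fun X => val X = obs_init)
       (fun X a Y => obs_step (val X) a (val Y)).

Definition opaque_obs_equiv (eqv : rel Q) : Prop :=
  [/\ (forall x, eqv x x),
      (forall x y, eqv x y -> eqv y x),
      (forall x y z, eqv x y -> eqv y z -> eqv x z),
      (forall x1 x2 s y1, eqv x1 x2 -> wtrans x1 s y1 ->
          exists2 y2, wtrans x2 s y2 & eqv y1 y2)
    & (forall x1 x2, eqv x1 x2 -> (x1 \in QS) = (x2 \in QS))].

Variable eqv : rel Q.

Definition eclass (x : Q) : {set Q} := [set y | eqv x y].

Definition is_class (C : {set Q}) : bool := [exists x, C == eclass x].

Definition qstate : finType := {C : {set Q} | is_class C}.

Definition qtr (C : qstate) (a : option Sigma) (D : qstate) : bool :=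
  [exists x in val C, exists y in val D, tr x a y].

Definition qinit : {set qstate} :=
  [set C | [exists x0 in Q0, val C == eclass x0]].

Definition qsecret : {set qstate} :=
  [set C | [exists x in QS, val C == eclass x]].

End OneAutomaton.
End Automata.

Arguments qtr [Sigma Q] tr eqv C a D.

(* Main.v *)
Require Import Defs.
From mathcomp Require Import all_boot.
Set Implicit Arguments. Unset Strict Implicit. Unset Printing Implicit Defensive.

Lemma lpath_cat (S Q : finType) (tr : Q -> option S -> Q -> bool) x l1 y l2 z :
  lpath tr x l1 y -> lpath tr y l2 z -> lpath tr x (l1 ++ l2) z.
Proof. by elim=> [//|p a q l r H _ IH] H2; apply: lpath_cons H (IH H2). Qed.

Lemma wtrans_cat (S Q : finType) (tr : Q -> option S -> Q -> bool) x s1 y s2 z :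
  wtrans tr x s1 y -> wtrans tr y s2 z -> wtrans tr x (s1 ++ s2) z.
Proof.
case=> l1 H1 <- [l2 H2 <-]; exists (l1 ++ l2); first exact: lpath_cat H1 H2.
by rewrite pmap_cat.
Qed.

Lemma wtrans1 (S Q : finType) (tr : Q -> option S -> Q -> bool) x a y :
  tr x a y -> wtrans tr x (pmap id [:: a]) y.
Proof. move=> H; exists [:: a] => //; apply: lpath_cons H (lpath_nil _ _). Qed.

Lemma wtrans0 (S Q : finType) (tr : Q -> option S -> Q -> bool) x : wtrans tr x [::] x.
Proof. by exists [::] => //; apply: lpath_nil. Qed.

Lemma connect_wtrans (S Q : finType) (tr : Q -> option S -> Q -> bool) x y :
  connect (fun p p' => tr p None p') x y <-> wtrans tr x [::] y.
Proof.
split.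
  move/connectP=> [p Hp ->]; elim: p x Hp => [|z p IH] x /=; first by move=> _; apply: wtrans0.
  move/andP=> [Hxz Hp]; apply: (@wtrans_cat _ _ tr x [::] z [::]); [exact: (wtrans1 (a:=None) Hxz) | exact: IH].
case=> l0 Hl; elim: Hl => [p _|p a q l r Ht _ IH]; first exact: connect0.
case: a Ht => [a|] Ht //= Hpm.
by apply: connect_trans (connect1 Ht) (IH Hpm).
Qed.

Lemma UR_w (S Q : finType) (tr : Q -> option S -> Q -> bool) B q :
  q \in UR tr B <-> exists2 b, b \in B & wtrans tr b [::] q.
Proof.
rewrite inE; split.
  by case/exists_inP=> b Hb /connect_wtrans Hw; exists b.
by case=> b Hb /connect_wtrans Hw; apply/exists_inP; exists b.
Qed.

Lemma UR_idem (S Q : finType) (tr : Q -> option S -> Q -> bool) B :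
  UR tr (UR tr B) = UR tr B.
Proof.
apply/setP=> q; apply/idP/idP.
  case/UR_w=> b /UR_w [c Hc Hcb] Hbq; apply/UR_w; exists c => //.
  exact: (wtrans_cat (s1:=[::]) (s2:=[::]) Hcb Hbq).
by move=> Hq; apply/UR_w; exists q => //; apply: wtrans0.
Qed.

Lemma split_w (S Q : finType) (tr : Q -> option S -> Q -> bool) x l q a s :
  lpath tr x l q -> pmap id l = a :: s ->
  exists x1, exists2 x2, wtrans tr x [::] x1 /\ tr x1 (Some a) x2 & wtrans tr x2 s q.
Proof.
move=> H; elim: H a s => [//|p b q' l' r Ht Hl IH] a s /=.
case: b Ht => [b|] Ht /=.
  case=> <- <-; exists p; exists q'; last by exists l'.
  by split=> //; apply: wtrans0.
move=> /IH [x1 [x2 [H1 H2] H3]]; exists x1; exists x2 => //; split=> //.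
exact: (@wtrans_cat _ _ tr p [::] q' [::] x1 (wtrans1 (a:=None) Ht) H1).
Qed.

Lemma URpost_w (S Q : finType) (tr : Q -> option S -> Q -> bool) X a q :
  UR tr X = X ->
  (q \in UR tr (post tr X a) <-> exists2 x, x \in X & wtrans tr x [:: a] q).
Proof.
move=> HX; split.
  case/UR_w=> b; rewrite inE => /exists_inP [x Hx Ht] Hw; exists x => //.
  exact: (@wtrans_cat _ _ tr x [:: a] b [::] q (wtrans1 (a:=Some a) Ht) Hw).
case=> x Hx [l Hl Hpm]; have [x1 [x2 [H1 H2] H3]] := split_w Hl Hpm.
apply/UR_w; exists x2; last exact: H3.
rewrite inE; apply/exists_inP; exists x1 => //.
by rewrite -HX; apply/UR_w; exists x.
Qed.

Section Q.
End Q.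

Definition eqv_props (Q : finType) (eqv : rel Q) :=
  [/\ (forall x, eqv x x), (forall x y, eqv x y -> eqv y x) &
      (forall x y z, eqv x y -> eqv y z -> eqv x z)].

Lemma eclass_eq (Q : finType) (eqv : rel Q) x y :
  eqv_props eqv -> eqv x y -> eclass eqv x = eclass eqv y.
Proof.
case=> r s t H; apply/setP=> z; rewrite !inE; apply/idP/idP => Hz.
  exact: t (s _ _ H) Hz.
exact: t H Hz.
Qed.

Lemma eclass_eqv (Q : finType) (eqv : rel Q) x y :
  eqv_props eqv -> eclass eqv x = eclass eqv y -> eqv x y.
Proof.
case=> r s t H; have : y \in eclass eqv y by rewrite inE.
by rewrite -H inE.
Qed.

Lemma class_mem (Q : finType) (eqv : rel Q) (C : qstate eqv) y :
  eqv_props eqv -> y \in val C -> val C = eclass eqv y.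
Proof.
move=> P; case: C => C /existsP [z /eqP HC] /=; rewrite HC inE => Hz.
exact: eclass_eq.
Qed.

Lemma cls_proof (Q : finType) (eqv : rel Q) x : is_class eqv (eclass eqv x).
Proof. by apply/existsP; exists x. Qed.

Definition cls (Q : finType) (eqv : rel Q) x : qstate eqv :=
  exist _ (eclass eqv x) (cls_proof eqv x).

Lemma pmap_cons1 (S : Type) (a : option S) l : pmap id (a :: l) = pmap id [:: a] ++ pmap id l.
Proof. by case: a. Qed.

Lemma Q1 (S Q : finType) (tr : Q -> option S -> Q -> bool) (eqv : rel Q) QS :
  opaque_obs_equiv tr QS eqv ->
  forall C l D, lpath (qtr tr eqv) C l D -> forall x, val C = eclass eqv x ->
  exists2 y, wtrans tr x (pmap id l) y & val D = eclass eqv y.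
Proof.
case=> r s t sim _; have P : eqv_props eqv by split.
move=> C l D; elim=> [p|p a q l' r' Ht _ IH] x Hx.
  by exists x => //; apply: wtrans0.
case/exists_inP: Ht => x' Hx' /exists_inP [y' Hy' Ht].
have Hxx' : eqv x x' by move: Hx'; rewrite Hx inE.
have [y2 Hw2 Hy2] := sim _ _ _ _ (s _ _ Hxx') (wtrans1 Ht).
have Hq : val q = eclass eqv y2 by rewrite (class_mem P Hy') (eclass_eq P Hy2).
have [y Hw Hy] := IH _ Hq; exists y => //.
rewrite pmap_cons1; exact: wtrans_cat Hw2 Hw.
Qed.

Lemma Q2 (S Q : finType) (tr : Q -> option S -> Q -> bool) (eqv : rel Q) :
  (forall x, eqv x x) ->
  forall x l y, lpath tr x l y -> lpath (qtr tr eqv) (cls eqv x) l (cls eqv y).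
Proof.
move=> r x l y; elim=> [p|p a q l' r' Ht _ IH]; first exact: lpath_nil.
apply: lpath_cons IH; apply/exists_inP; exists p; first by rewrite inE.
by apply/exists_inP; exists q; first by rewrite inE.
Qed.

Lemma quot_w (S Q : finType) (tr : Q -> option S -> Q -> bool) (eqv : rel Q) QS B s C :
  opaque_obs_equiv tr QS eqv ->
  (exists2 D, D \in qinit B eqv & wtrans (qtr tr eqv) D s C) <->
  (exists2 y, (exists2 b, b \in B & wtrans tr b s y) & val C = eclass eqv y).
Proof.
move=> O; have O' := O; case: O' => r _ _ _ _; split.
  case=> D; rewrite inE => /exists_inP [b Hb /eqP HD] [l Hl <-].
  have [y Hw Hy] := Q1 O Hl HD; exists y => //; by exists b.
case=> y [b Hb [l Hl Hpm]] HC; exists (cls eqv b).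
  by rewrite inE; apply/exists_inP; exists b.
have -> : C = cls eqv y by apply: val_inj; rewrite HC.
by exists l => //; apply: Q2.
Qed.

Lemma E0 (S Q : finType) (tr : Q -> option S -> Q -> bool) (eqv : rel Q) QS B :
  opaque_obs_equiv tr QS eqv ->
  UR (qtr tr eqv) (qinit B eqv) = qinit (UR tr B) eqv.
Proof.
move=> O; apply/setP=> C; apply/idP/idP.
  case/UR_w => D HD Hw.
  have [y [b Hb Hby] HC] := (quot_w _ _ _ O).1 (ex_intro2 _ _ D HD Hw).
  rewrite inE; apply/exists_inP; exists y; last by apply/eqP.
  by apply/UR_w; exists b.
rewrite inE => /exists_inP [y Hy /eqP HC]; case/UR_w: Hy => b Hb Hby.
apply/UR_w; apply (quot_w _ _ _ O).2; exists y => //; by exists b.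
Qed.

Lemma E1 (S Q : finType) (tr : Q -> option S -> Q -> bool) (eqv : rel Q) QS X a :
  opaque_obs_equiv tr QS eqv -> UR tr X = X ->
  UR (qtr tr eqv) (post (qtr tr eqv) (qinit X eqv) a) = qinit (UR tr (post tr X a)) eqv.
Proof.
move=> O HX.
have HQ : UR (qtr tr eqv) (qinit X eqv) = qinit X eqv by rewrite (E0 X O) HX.
apply/setP=> C; apply/idP/idP.
  case/(URpost_w _ _ HQ) => D HD Hw.
  have [y [b Hb Hby] HC] := (quot_w _ _ _ O).1 (ex_intro2 _ _ D HD Hw).
  rewrite inE; apply/exists_inP; exists y; last by apply/eqP.
  by apply/(URpost_w _ _ HX); exists b.
rewrite inE => /exists_inP [y Hy /eqP HC]; case/(URpost_w _ _ HX): Hy => b Hb Hby.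
apply/(URpost_w _ _ HQ); apply (quot_w _ _ _ O).2; exists y => //; by exists b.
Qed.

Lemma qinit0 (Q : finType) (eqv : rel Q) X :
  (qinit X eqv == set0) = (X == set0).
Proof.
apply: negb_inj; apply/idP/idP => /set0Pn [z Hz]; apply/set0Pn.
  by rewrite inE in Hz; case/exists_inP: Hz => x Hx _; exists x.
by exists (cls eqv z); rewrite inE; apply/exists_inP; exists z.
Qed.

Lemma qsub (S Q : finType) (tr : Q -> option S -> Q -> bool) (eqv : rel Q) QS X :
  opaque_obs_equiv tr QS eqv ->
  (qinit X eqv \subset qsecret QS eqv) = (X \subset QS).
Proof.
case=> r s t _ sec; have P : eqv_props eqv by split.
apply/subsetP/subsetP => H.
  move=> x Hx; have : cls eqv x \in qsecret QS eqv.
    by apply: H; rewrite inE; apply/exists_inP; exists x.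
  rewrite inE => /exists_inP [z Hz /eqP /= Hxz].
  by rewrite (sec _ _ (eclass_eqv P Hxz)).
move=> C; rewrite !inE => /exists_inP [x Hx HC]; apply/exists_inP; exists x => //.
exact: H.
Qed.

Lemma okq (S Q : finType) (tr : Q -> option S -> Q -> bool) (eqv : rel Q) QS X :
  opaque_obs_equiv tr QS eqv ->
  obs_ok (qsecret QS eqv) (qinit X eqv) = obs_ok QS X.
Proof. by move=> O; rewrite /obs_ok (qsub _ O). Qed.

Theorem proposition1 (Sigma Q : finType) (tr : Q -> option Sigma -> Q -> bool)
  (Q0 QS : {set Q}) (eqv : rel Q) :
  opaque_obs_equiv tr QS eqv ->
  bisimilar (det tr Q0) (det (qtr tr eqv) (qinit Q0 eqv)) /\
  bisimilar (det_d tr Q0 QS)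
            (det_d (qtr tr eqv) (qinit Q0 eqv) (qsecret QS eqv)).
Proof.
move=> O.
have Hinit : obs_init (qtr tr eqv) (qinit Q0 eqv) = qinit (obs_init tr Q0) eqv.
  exact: (E0 Q0 O).
split.
  exists (fun (p1 : lts_state (det tr Q0))
              (p2 : lts_state (det (qtr tr eqv) (qinit Q0 eqv))) =>
            val p2 = qinit (val p1) eqv /\ UR tr (val p1) = val p1).
  split; [|split; [|split]].
  - move=> p1; rewrite /det /= => H1.
    exists (exist _ (obs_init (qtr tr eqv) (qinit Q0 eqv)) (connect0 _ _)) => //=.
    by rewrite H1 Hinit /obs_init UR_idem.
  - move=> p2; rewrite /det /= => H2.
    exists (exist _ (obs_init tr Q0) (connect0 _ _)) => //=.
    by rewrite H2 Hinit /obs_init UR_idem.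
  - move=> p1 p2 a q1 [Hp2 Hp1]; rewrite /det /= => /andP [/eqP Hq1 Hne].
    have {}Hq1 : val q1 = UR tr (post tr (val p1) a) := Hq1.
    have E : UR (qtr tr eqv) (post (qtr tr eqv) (val p2) a) = qinit (val q1) eqv.
      by rewrite Hp2 (E1 a O Hp1) Hq1.
    have Hst : obs_step (qtr tr eqv) (val p2) a (qinit (val q1) eqv).
      by rewrite /obs_step E eqxx qinit0 Hne.
    have Hr : obs_reach (qtr tr eqv) (qinit Q0 eqv) (qinit (val q1) eqv).
      apply: connect_trans (valP p2) _; apply: connect1; apply/existsP; by exists a.
    exists (exist (obs_reach (qtr tr eqv) (qinit Q0 eqv)) _ Hr) => //=; split=> //; by rewrite Hq1 UR_idem.
  - move=> p1 p2 a q2 [Hp2 Hp1]; rewrite /det /= => /andP [/eqP Hq2 Hne].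
    have {}Hq2 : val q2 = UR (qtr tr eqv) (post (qtr tr eqv) (val p2) a) := Hq2.
    rewrite Hp2 (E1 a O Hp1) in Hq2.
    have Hne' : UR tr (post tr (val p1) a) != set0 by rewrite -(qinit0 eqv) -Hq2.
    have Hst : obs_step tr (val p1) a (UR tr (post tr (val p1) a)).
      by rewrite /obs_step eqxx Hne'.
    have Hr : obs_reach tr Q0 (UR tr (post tr (val p1) a)).
      apply: connect_trans (valP p1) _; apply: connect1; apply/existsP; by exists a.
    exists (exist (obs_reach tr Q0) _ Hr) => //=; split=> //; by rewrite UR_idem.
exists (fun (p1 : lts_state (det_d tr Q0 QS))
            (p2 : lts_state (det_d (qtr tr eqv) (qinit Q0 eqv) (qsecret QS eqv))) =>
          val p2 = qinit (val p1) eqv /\ UR tr (val p1) = val p1).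
split; [|split; [|split]].
- move=> p1; rewrite /det_d /= => H1.
  have := valP p1; rewrite /obs_reach_d => /and3P [ok0 _ _].
  have Hr : obs_reach_d (qtr tr eqv) (qinit Q0 eqv) (qsecret QS eqv)
               (obs_init (qtr tr eqv) (qinit Q0 eqv)).
    by rewrite /obs_reach_d Hinit (okq _ O) ok0 connect0.
  exists (exist (obs_reach_d (qtr tr eqv) (qinit Q0 eqv) (qsecret QS eqv)) _ Hr) => //=.
  by rewrite H1 Hinit /obs_init UR_idem.
- move=> p2; rewrite /det_d /= => H2.
  have := valP p2; rewrite /obs_reach_d => /and3P [ok0 _ _].
  rewrite Hinit (okq _ O) in ok0.
  have Hr : obs_reach_d tr Q0 QS (obs_init tr Q0).
    by rewrite /obs_reach_d ok0 connect0.
  exists (exist (obs_reach_d tr Q0 QS) _ Hr) => //=.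
  by rewrite H2 Hinit /obs_init UR_idem.
- move=> p1 p2 a q1 [Hp2 Hp1]; rewrite /det_d /= => /andP [/eqP Hq1 Hne].
    have {}Hq1 : val q1 = UR tr (post tr (val p1) a) := Hq1.
  have E : UR (qtr tr eqv) (post (qtr tr eqv) (val p2) a) = qinit (val q1) eqv.
    by rewrite Hp2 (E1 a O Hp1) Hq1.
  have Hst : obs_step (qtr tr eqv) (val p2) a (qinit (val q1) eqv).
    by rewrite /obs_step E eqxx qinit0 Hne.
  have := valP p1; rewrite /obs_reach_d => /and3P [ok0 okp1 _].
  have := valP q1; rewrite /obs_reach_d => /and3P [_ okq1 _].
  have := valP p2; rewrite /obs_reach_d => /and3P [_ _ cp2].
  have Hr : obs_reach_d (qtr tr eqv) (qinit Q0 eqv) (qsecret QS eqv) (qinit (val q1) eqv).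
    apply/and3P; split; first by rewrite Hinit (okq _ O).
      by rewrite (okq _ O).
    apply: connect_trans cp2 _; apply: connect1.
    apply/and3P; split; [by rewrite Hp2 (okq _ O) | by rewrite (okq _ O) |].
    by apply/existsP; exists a.
  exists (exist (obs_reach_d (qtr tr eqv) (qinit Q0 eqv) (qsecret QS eqv)) _ Hr) => //=; split=> //; by rewrite Hq1 UR_idem.
- move=> p1 p2 a q2 [Hp2 Hp1]; rewrite /det_d /= => /andP [/eqP Hq2 Hne].
    have {}Hq2 : val q2 = UR (qtr tr eqv) (post (qtr tr eqv) (val p2) a) := Hq2.
  rewrite Hp2 (E1 a O Hp1) in Hq2.
  have Hne' : UR tr (post tr (val p1) a) != set0 by rewrite -(qinit0 eqv) -Hq2.
  have Hst : obs_step tr (val p1) a (UR tr (post tr (val p1) a)).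
    by rewrite /obs_step eqxx Hne'.
  have := valP p1; rewrite /obs_reach_d => /and3P [ok0 okp1 cp1].
  have := valP q2; rewrite /obs_reach_d => /and3P [_ okq2 _].
  rewrite Hq2 (okq _ O) in okq2.
  have Hr : obs_reach_d tr Q0 QS (UR tr (post tr (val p1) a)).
    apply/and3P; split=> //.
    apply: connect_trans cp1 _; apply: connect1.
    apply/and3P; split=> //; apply/existsP; by exists a.
  exists (exist (obs_reach_d tr Q0 QS) _ Hr) => //=; split=> //; by rewrite UR_idem.
Qed.
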